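(* Let $G$ be a discrete group and $1<p<\infty$, and let $B_1=\{f\in\ell^1(G):\|f\|_{A_p(G)}\le 1\}$ be the unit ball of $(\ell^1(G),\cdot,\|\cdot\|_{A_p(G)})$. Suppose $B_1$ is bounded in the $\ell^1$-norm, i.e. there is $\alpha>0$ with $\|f\|_1\le\alpha$ for all $f\in B_1$. Then: (i) $(\ell^1(G),\cdot,\|\cdot\|_{A_p(G)})$ is Arens regular; (ii) $A_p(G)$ is Arens regular; (iii) $G$ has no infinite abelian subgroup; (iv) there is no sequence $(H_n)$ of finite subgroups of $G$ with $|H_1|<|H_2|<|H_3|<\cdots$; (v) there is $M>0$ such that $O(x)\le M$ for every $x\in G$, where $O(x)$ denotes the order of $x$.
   Context: For a discrete group $G$ and $1<p<\infty$, $\frac1p+\frac1q=1$, $A_p(G)$ is the space of functions $u=\sum_{i=1}^\infty g_i*f_i^{\vee}$ with $f_i\in \ell_p(G)$, $g_i\in \ell_q(G)$, $\sum_i\|f_i\|_p\|g_i\|_q<\infty$, where $f^{\vee}(x)=f(x^{-1})$; with pointwise multiplication and norm $\|u\|_{A_p(G)}=\inf\{\sum_i\|f_i\|_p\|g_i\|_q\}$ it is a commutative Banach algebra (the Herz algebra), and $\ell^1(G)\subseteq A_p(G)$ with $\|f\|_{A_p(G)}\le\|f\|_1$. A (normed) algebra $A$ is Arens regular if for all sequences $(a_n),(b_m)$ in its closed unit ball and all $T\in A^*$, $\lim_n\lim_m T(a_nb_m)=\lim_m\lim_n T(a_nb_m)$ whenever both exist. *)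

(* Defs.v *)
From HB Require Import structures.
From mathcomp Require Import all_boot all_order all_algebra.
From mathcomp Require Import all_classical all_reals all_analysis.
From mathcomp Require Import complex.

Set Implicit Arguments.
Unset Strict Implicit.
Unset Printing Implicit Defensive.

Import Order.TTheory GRing.Theory Num.Theory.
Local Open Scope classical_set_scope.
Local Open Scope ring_scope.

(* A (discrete, possibly infinite) group: carrier with multiplication,
   inverse and unit satisfying the group axioms.  The carrier is a
   choiceType (every type is one classically). *)
Record dgroup := DGroup {
  gcar :> choiceType;
  gmul : gcar -> gcar -> gcar;
  ginv : gcar -> gcar;
  gone : gcar;
  gmulA : forall x y z, gmul x (gmul y z) = gmul (gmul x y) z;
  gmul1 : forall x, gmul gone x = x;
  gmulV : forall x, gmul (ginv x) x = gone }.

Section GroupTheory.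
Variable G : dgroup.

Definition is_subgroup (H : set G) : Prop :=
  H (gone G) /\ (forall x y, H x -> H y -> H (gmul x y)) /\
  (forall x, H x -> H (ginv x)).

Definition abelian_set (H : set G) : Prop :=
  forall x y, H x -> H y -> gmul x y = gmul y x.

Definition has_card (H : set G) (n : nat) : Prop :=
  exists e : 'I_n -> G, injective e /\ range e = H.

Definition gpow (x : G) (n : nat) : G := iter n (gmul x) (gone G).

(* O(x) <= M, where O(x) is the order of x: x has finite order at most M,
   i.e. x^n = 1 for some 1 <= n <= M. *)
Definition order_le (x : G) (M : nat) : Prop :=
  exists n : nat, (0 < n <= M)%N /\ gpow x n = gone G.

End GroupTheory.

Section Analysis.
Variable R : realType.
Variable G : dgroup.

Local Notation C := (R[i]).

Definition normC (z : C) : R := ComplexField.Normc.normc z.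

Definition sumR (T : choiceType) (h : T -> R) : R :=
  fine (esum [set: T] (fun x => (Num.max (h x) 0)%:E)) -
  fine (esum [set: T] (fun x => (Num.max (- h x) 0)%:E)).

Definition sumC (T : choiceType) (h : T -> C) : C :=
  Complex (sumR (fun x => complex.Re (h x))) (sumR (fun x => complex.Im (h x))).

Definition lp_mem (p : R) (f : G -> C) : Prop :=
  (esum [set: G] (fun x => (normC (f x) `^ p)%:E) < +oo)%E.

Definition lpnorm (p : R) (f : G -> C) : R :=
  (fine (esum [set: G] (fun x => (normC (f x) `^ p)%:E))) `^ (p^-1).

Definition l1_mem (f : G -> C) : Prop :=
  (esum [set: G] (fun x => (normC (f x))%:E) < +oo)%E.

Definition l1norm (f : G -> C) : R :=
  fine (esum [set: G] (fun x => (normC (f x))%:E)).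

(* conjugate exponent q, 1/p + 1/q = 1 *)
Definition conj_exp (p : R) : R := p / (p - 1).

Definition check (f : G -> C) : G -> C := fun x => f (ginv x).

Definition conv (g h : G -> C) : G -> C :=
  fun x => sumC (fun y => g y * h (gmul (ginv y) x)).

Definition rep_cost (p : R) (f g : nat -> G -> C) : \bar R :=
  esum [set: nat] (fun i => (lpnorm p (f i) * lpnorm (conj_exp p) (g i))%:E).

Definition Ap_repr (p : R) (f g : nat -> G -> C) (u : G -> C) : Prop :=
  (forall i, lp_mem p (f i) /\ lp_mem (conj_exp p) (g i)) /\
  (rep_cost p f g < +oo)%E /\
  (forall x, u x = sumC (fun i => conv (g i) (check (f i)) x)).

Definition Ap_mem (p : R) (u : G -> C) : Prop :=
  exists f g, Ap_repr p f g u.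

Definition Apnorm (p : R) (u : G -> C) : R :=
  inf [set r : R | exists f g, Ap_repr p f g u /\ r = fine (rep_cost p f g)].

Definition cvgC (u : nat -> C) (l : C) : Prop :=
  forall e : R, 0 < e -> exists N : nat, forall n, (N <= n)%N -> normC (u n - l) < e.

Definition in_dual (S : set (G -> C)) (N : (G -> C) -> R) (T : (G -> C) -> C) : Prop :=
  (forall f g, S f -> S g -> T (fun x => f x + g x) = T f + T g) /\
  (forall (c : C) f, S f -> T (fun x => c * f x) = c * T f) /\
  (exists K : R, forall f, S f -> normC (T f) <= K * N f).

Definition arens_regular (S : set (G -> C)) (N : (G -> C) -> R) : Prop :=
  forall (a b : nat -> G -> C) (T : (G -> C) -> C),
    (forall n, S (a n) /\ N (a n) <= 1) ->
    (forall m, S (b m) /\ N (b m) <= 1) ->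
    in_dual S N T ->
    forall l1 l2 : C,
      (exists L : nat -> C,
          (forall n, cvgC (fun m => T (fun x => a n x * b m x)) (L n)) /\ cvgC L l1) ->
      (exists K : nat -> C,
          (forall m, cvgC (fun n => T (fun x => a n x * b m x)) (K m)) /\ cvgC K l2) ->
      l1 = l2.

End Analysis.

(* Main.v *)
Require Import Defs.
From HB Require Import structures.
From mathcomp Require Import all_boot all_order all_algebra.
From mathcomp Require Import all_classical all_reals all_analysis.
From mathcomp Require Import complex.
From mathcomp Require Import ring lra.

Import Order.TTheory GRing.Theory Num.Theory numFieldNormedType.Exports.
Local Open Scope classical_set_scope.
Local Open Scope ring_scope.
Set Implicit Arguments. Unset Strict Implicit. Unset Printing Implicit Defensive.

Section S.
Variable R : realType.

Definition cvgR (u : nat -> R) (l : R) :=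
  forall e : R, 0 < e -> exists N : nat, forall n, (N <= n)%N -> `|u n - l| < e.

Lemma bnd_fun (u : nat -> R) (K : R) : (forall n, `|u n| <= K) -> bounded_fun u.
Proof.
move=> H; exists K; split; first by rewrite num_real.
move=> M HM n _; exact: le_trans (H n) (ltW HM).
Qed.

Lemma cvgn_cvgR (u : nat -> R) : cvgn u -> exists l, cvgR u l.
Proof.
move=> cu; exists (limn u) => e e0.
have := (proj1 (cvgrPdist_lt _ _) cu e e0).
move=> [N _ HN]; exists N => n Nn; rewrite distrC; exact: HN.
Qed.

Lemma incr_ge (f : nat -> nat) : increasing_seq f -> forall n, (n <= f n)%N.
Proof.
move=> hf; elim=> [//|n IH]; apply: leq_ltn_trans IH _.
rewrite ltnNge -[(f n.+1 <= f n)%N]/(f n.+1 <= f n)%O hf.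
by apply/negP; rewrite /= ltnn.
Qed.

Local Notation C := (R[i]).
Local Notation nC := (@normC R).
Local Notation cvC := (@cvgC R).

Lemma nC_ge0 z : 0 <= nC z.
Proof. by case: z => a b; rewrite /normC /=; exact: sqrtr_ge0. Qed.

Lemma nC_add x y : nC (x + y) <= nC x + nC y.
Proof. exact: (@le_normcD R x y). Qed.

Lemma nC_mul x y : nC (x * y) = nC x * nC y.
Proof. exact: ComplexField.Normc.normcM. Qed.

Lemma nC_opp x : nC (- x) = nC x.
Proof. exact: (@normcN R x). Qed.

Lemma nC_subC x y : nC (x - y) = nC (y - x).
Proof. by rewrite -nC_opp opprB. Qed.

Lemma nC0 : nC 0 = 0.
Proof. exact: ComplexField.Normc.normc0. Qed.

Lemma nC_eq0 z : nC z = 0 -> z = 0.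
Proof. exact: ComplexField.Normc.eq0_normc. Qed.

Lemma nC_ReIm z : nC z <= `|complex.Re z| + `|complex.Im z|.
Proof.
case: z => a b; rewrite /normC /=.
rewrite -(@ger0_norm _ (`|a| + `|b|)) ?addr_ge0 // -sqrtr_sqr ler_sqrt ?sqr_ge0 //.
have ha : `|a| ^+ 2 = a ^+ 2 by rewrite real_normK ?num_real.
have hb : `|b| ^+ 2 = b ^+ 2 by rewrite real_normK ?num_real.
rewrite sqrrD ha hb -addrA lerD2l lerDr; apply: mulrn_wge0; apply: mulr_ge0; exact: normr_ge0.
Qed.

Lemma nC_Re z : `|complex.Re z| <= nC z.
Proof.
case: z => a b; rewrite /normC /= -sqrtr_sqr ler_sqrt ?addr_ge0 ?sqr_ge0 //.
by rewrite lerDl sqr_ge0.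
Qed.

Lemma nC_Im z : `|complex.Im z| <= nC z.
Proof.
case: z => a b; rewrite /normC /= -sqrtr_sqr ler_sqrt ?addr_ge0 ?sqr_ge0 //.
by rewrite lerDr sqr_ge0.
Qed.

Lemma cvgC_cst (c : C) : cvC (fun _ => c) c.
Proof. by move=> e e0; exists 0%N => n _; rewrite subrr nC0. Qed.

Lemma cvgC_add u v l m : cvgC u l -> cvgC v m -> cvC (fun n => u n + v n) (l + m).
Proof.
move=> hu hv e e0.
have e20 : 0 < e / 2 by rewrite divr_gt0.
have [N1 H1] := hu _ e20; have [N2 H2] := hv _ e20.
exists (maxn N1 N2) => n Nn.
have h1 := H1 n (leq_trans (leq_maxl _ _) Nn).
have h2 := H2 n (leq_trans (leq_maxr _ _) Nn).
have -> : u n + v n - (l + m) = (u n - l) + (v n - m) by rewrite opprD addrACA.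
apply: le_lt_trans (nC_add _ _) _.
by rewrite (splitr e) ltrD.
Qed.

Lemma cvgC_cmul (c : C) u l : cvgC u l -> cvC (fun n => c * u n) (c * l).
Proof.
move=> hu e e0.
have hc : 0 < nC c + 1 by apply: lt_le_trans (ltr01) _; rewrite lerDr nC_ge0.
have [N HN] := hu (e / (nC c + 1)) (divr_gt0 e0 hc).
exists N => n Nn; rewrite -mulrBr nC_mul.
have := HN n Nn; rewrite ltr_pdivlMr // => h.
apply: le_lt_trans h; rewrite mulrC; apply: ler_wpM2l; first exact: nC_ge0.
by rewrite lerDl.
Qed.

Lemma cvgC_sumseq (I : eqType) (s : seq I) (c : I -> C) (V : nat -> I -> C) (v : I -> C) :
  (forall x, x \in s -> cvC (fun n => V n x) (v x)) ->
  cvC (fun n => \sum_(x <- s) c x * V n x) (\sum_(x <- s) c x * v x).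
Proof.
elim: s => [|y s IH] H.
  rewrite big_nil; under [fun n => _]funext do rewrite big_nil; exact: cvgC_cst.
rewrite big_cons; under [fun n => _]funext do rewrite big_cons.
apply: cvgC_add; first by apply: cvgC_cmul; apply: H; rewrite mem_head.
by apply: IH => x xs; apply: H; rewrite in_cons xs orbT.
Qed.

Lemma cvgC_sub (f : nat -> nat) u l : increasing_seq f -> cvgC u l -> cvC (fun n => u (f n)) l.
Proof.
move=> hf hu e e0; have [N HN] := hu e e0; exists N => n Nn.
apply: HN; exact: (leq_trans Nn (incr_ge hf n)).
Qed.

Lemma cvgC_uniq u l m : cvC u l -> cvC u m -> l = m.
Proof.
move=> hl hm; apply/eqP; apply/negPn/negP => /eqP lm.
have d0 : 0 < nC (l - m).
  rewrite lt_neqAle nC_ge0 andbT; apply/eqP => h.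
  by apply: lm; apply/eqP; rewrite -subr_eq0; apply/eqP; apply: nC_eq0.
have e20 : 0 < nC (l - m) / 2 by rewrite divr_gt0.
have [N1 H1] := hl _ e20; have [N2 H2] := hm _ e20.
have h1 := H1 _ (leq_maxl N1 N2); have h2 := H2 _ (leq_maxr N1 N2).
set w := u (maxn N1 N2) in h1 h2.
have key : nC (l - m) <= nC (w - m) + nC (w - l).
  have -> : l - m = (w - m) - (w - l) by ring.
  by apply: le_trans (nC_add _ _) _; rewrite nC_opp.
have : nC (w - m) + nC (w - l) < nC (l - m) by rewrite (splitr (nC (l - m))) ltrD.
by rewrite ltNge key.
Qed.

Lemma nC_sub_ReIm z a b : nC (z - (a +i* b)%C) <= `|complex.Re z - a| + `|complex.Im z - b|.
Proof. by case: z => x y; apply: (le_trans (nC_ReIm _)). Qed.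

Lemma cvgR_sub (f : nat -> nat) u l : increasing_seq f -> cvgR u l -> cvgR (fun n => u (f n)) l.
Proof.
move=> hf hu e e0; have [N HN] := hu e e0; exists N => n Nn.
apply: HN; exact: (leq_trans Nn (incr_ge hf n)).
Qed.

Lemma incr_comp (f g : nat -> nat) : increasing_seq f -> increasing_seq g ->
  increasing_seq (fun n => f (g n)).
Proof. by move=> hf hg x y; rewrite hf; exact: hg x y. Qed.

Lemma bwC (z : nat -> C) K : (forall n, nC (z n) <= K) ->
  exists f, increasing_seq f /\ exists l, cvC (fun n => z (f n)) l.
Proof.
move=> hK.
have [f1 hf1 c1] := @bolzano_weierstrass R (fun n => complex.Re (z n))
  (bnd_fun (fun n => le_trans (nC_Re _) (hK n))).
have [a ha] := cvgn_cvgR c1.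
have [f2 hf2 c2] := @bolzano_weierstrass R (fun n => complex.Im (z (f1 n)))
  (bnd_fun (fun n => le_trans (nC_Im _) (hK (f1 n)))).
have [b hb] := cvgn_cvgR c2.
have ha2 := cvgR_sub hf2 ha.
exists (fun n => f1 (f2 n)); split; first exact: incr_comp.
exists (a +i* b)%C => e e0.
have e20 : 0 < e / 2 by rewrite divr_gt0.
have [N1 H1] := ha2 _ e20; have [N2 H2] := hb _ e20.
exists (maxn N1 N2) => n Nn.
have h1 := H1 n (leq_trans (leq_maxl _ _) Nn).
have h2 := H2 n (leq_trans (leq_maxr _ _) Nn).
apply: le_lt_trans (nC_sub_ReIm _ _ _) _.
by rewrite (splitr e) ltrD.
Qed.

Lemma multi_bw (I : eqType) (s : seq I) (A : nat -> I -> C) K :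
  (forall n x, nC (A n x) <= K) ->
  exists f, increasing_seq f /\ exists al : I -> C,
    forall x, x \in s -> cvC (fun n => A (f n) x) (al x).
Proof.
move=> hK; elim: s => [|y s [f [hf [al hal]]]].
  by exists id; split => //; exists (fun _ => 0).
have [g [hg [l hl]]] := bwC (fun n => hK (f n) y).
exists (fun n => f (g n)); split; first exact: incr_comp.
exists (fun x => if x == y then l else al x) => x.
rewrite in_cons; case: eqP => [-> _|_ /= xs]; first exact: hl.
exact: (cvgC_sub hg (hal x xs)).
Qed.

Lemma double_lim (I : eqType) (s : seq I) (A B : nat -> I -> C) (t : I -> C) K :
  (forall n x, nC (A n x) <= K) -> (forall n x, nC (B n x) <= K) ->
  forall l1 l2,
  (exists L, (forall n, cvC (fun m => \sum_(x <- s) A n x * B m x * t x) (L n)) /\ cvC L l1) ->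
  (exists Kk, (forall m, cvC (fun n => \sum_(x <- s) A n x * B m x * t x) (Kk m)) /\ cvC Kk l2) ->
  l1 = l2.
Proof.
move=> hA hB l1 l2 [L [hL hl1]] [Kk [hK hl2]].
have [f [hf [al hal]]] := multi_bw s hA.
have [g [hg [be hbe]]] := multi_bw s hB.
have EL n : L n = \sum_(x <- s) (A n x * t x) * be x.
  apply: cvgC_uniq (cvgC_sub hg (hL n)) _.
  have -> : (fun m => \sum_(x <- s) A n (x) * B (g m) x * t x) =
            (fun m => \sum_(x <- s) (A n x * t x) * B (g m) x).
    by apply: funext => m; apply: eq_bigr => x _; ring.
  exact: cvgC_sumseq.
have EK m : Kk m = \sum_(x <- s) (B m x * t x) * al x.
  apply: cvgC_uniq (cvgC_sub hf (hK m)) _.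
  have -> : (fun n => \sum_(x <- s) A (f n) x * B m x * t x) =
            (fun n => \sum_(x <- s) (B m x * t x) * A (f n) x).
    by apply: funext => n; apply: eq_bigr => x _; ring.
  exact: cvgC_sumseq.
have -> : l1 = \sum_(x <- s) (be x * t x) * al x.
  apply: cvgC_uniq (cvgC_sub hf hl1) _.
  have -> : (fun n => L (f n)) = (fun n => \sum_(x <- s) (be x * t x) * A (f n) x).
    by apply: funext => n; rewrite EL; apply: eq_bigr => x _; ring.
  exact: cvgC_sumseq.
have -> : l2 = \sum_(x <- s) (al x * t x) * be x.
  apply: cvgC_uniq (cvgC_sub hg hl2) _.
  have -> : (fun m => Kk (g m)) = (fun m => \sum_(x <- s) (al x * t x) * B (g m) x).
    by apply: funext => m; rewrite EK; apply: eq_bigr => x _; ring.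
  exact: cvgC_sumseq.
by apply: eq_bigr => x _; ring.
Qed.

Lemma esum_seq (T : choiceType) (s : seq T) (a : T -> R) : uniq s ->
  (forall x, 0 <= a x) -> (forall x, x \notin s -> a x = 0) ->
  esum [set: T] (fun x => (a x)%:E) = (\sum_(x <- s) a x)%:E.
Proof.
move=> us a0 a_out.
rewrite -sumEFin (fsbig_seq _ _ us).
rewrite -esum_fset; last by move=> i _; rewrite lee_fin.
  rewrite [RHS]esum_mkcond; apply: eq_esum => x _.
  case: ifPn => // /negP xs; rewrite a_out //; apply/negP => xs'; apply: xs.
  by rewrite inE.
exact: finite_seq.
Qed.

Lemma maxN0 (x : R) : Num.max x 0 - Num.max (- x) 0 = x.
Proof.
rewrite /Order.max oppr_lt0.
have [hx|hx|hx] := ltgtP x 0 => /=.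
- by rewrite sub0r opprK.
- by rewrite subr0.
- by rewrite hx oppr0 subr0.
Qed.

Lemma max0_ge0 (x : R) : 0 <= Num.max x 0.
Proof. by rewrite /Order.max; case: ifPn => //; rewrite -leNgt. Qed.

Lemma max00 : Num.max (0 : R) 0 = 0.
Proof. by rewrite /Order.max ltxx. Qed.

Lemma sumR_seq (T : choiceType) (s : seq T) (h : T -> R) : uniq s ->
  (forall x, x \notin s -> h x = 0) -> sumR h = \sum_(x <- s) h x.
Proof.
move=> us hout; rewrite /sumR.
rewrite (esum_seq us (fun x => max0_ge0 _)); last first.
  by move=> x xs; rewrite hout ?oppr0 ?max00.
rewrite (esum_seq us (fun x => max0_ge0 _)); last first.
  by move=> x xs; rewrite hout ?oppr0 ?max00.
by rewrite /= -sumrB; apply: eq_bigr => x _; rewrite maxN0.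
Qed.

Lemma sum_complex (T : Type) (s : seq T) (h : T -> C) :
  \sum_(x <- s) h x = ((\sum_(x <- s) complex.Re (h x)) +i* (\sum_(x <- s) complex.Im (h x)))%C.
Proof.
elim: s => [|y s IH]; first by rewrite !big_nil.
by rewrite !big_cons IH; case: (h y).
Qed.

Lemma sumC_seq (T : choiceType) (s : seq T) (h : T -> C) : uniq s ->
  (forall x, x \notin s -> h x = 0) -> sumC h = \sum_(x <- s) h x.
Proof.
move=> us hout; rewrite sum_complex /sumC.
by rewrite (sumR_seq us) ?(sumR_seq us) // => x xs; rewrite hout.
Qed.

End S.

Section Grp.
Variable G : dgroup.
Local Notation e := (gone G).
Local Notation "x ** y" := (gmul x y) (at level 40).

Lemma gmulV' (x : G) : x ** ginv x = e.
Proof.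
have h : ginv (ginv x) ** ginv x = e by exact: gmulV.
rewrite -[x ** ginv x]gmul1 -h -gmulA [ginv x ** (x ** ginv x)]gmulA gmulV gmul1 h //.
Qed.

Lemma gmul1r (x : G) : x ** e = x.
Proof. by rewrite -(gmulV x) gmulA gmulV' gmul1. Qed.

Lemma gmulK (x y : G) : ginv x ** (x ** y) = y.
Proof. by rewrite gmulA gmulV gmul1. Qed.

Lemma gmulKV (x y : G) : x ** (ginv x ** y) = y.
Proof. by rewrite gmulA gmulV' gmul1. Qed.

Lemma ginvK (x : G) : ginv (ginv x) = x.
Proof. by rewrite -[ginv (ginv x)]gmul1r -(gmulV x) gmulA gmulV gmul1. Qed.

Lemma ginv1 : ginv e = e.
Proof. by rewrite -[ginv e]gmul1r gmulV. Qed.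

Lemma gmul_inj (x y z : G) : x ** y = x ** z -> y = z.
Proof. by move=> h; rewrite -(gmulK x y) h gmulK. Qed.

Lemma gpowD (x : G) m n : gpow x (m + n) = gpow x m ** gpow x n.
Proof.
elim: m => [|m IH]; first by rewrite add0n /gpow /= gmul1.
by rewrite addSn /gpow /= -/(gpow x (m + n)) -/(gpow x m) IH gmulA.
Qed.

End Grp.

Section Rep.
Variables (R : realType) (G : dgroup).
Local Notation C := (R[i]).
Local Notation nC := (@normC R).
Local Notation e := (gone G).

Definition dlt (a : G) : G -> C := fun y => if y == a then 1 else 0.

Lemma conv_dlt (u : G -> C) x : Defs.conv u (check (dlt e)) x = u x.
Proof.
rewrite /Defs.conv /check (@sumC_seq R G [:: x]) //.
  by rewrite big_seq1 /dlt gmulV ginv1 eqxx mulr1.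
move=> y; rewrite inE => /eqP yx; rewrite /dlt; case: eqP => [h|_]; last by rewrite mulr0.
exfalso; apply: yx.
have h2 : gmul (ginv y) x = e by rewrite -[gmul _ _]ginvK h ginv1.
by rewrite -(gmulKV y x) h2 gmul1r.
Qed.

Lemma lp_seq (r : R) (f : G -> C) (s : seq G) : 0 < r -> uniq s ->
  (forall x, x \notin s -> f x = 0) ->
  lp_mem r f /\ lpnorm r f = (\sum_(x <- s) nC (f x) `^ r) `^ r^-1.
Proof.
move=> r0 us hout.
have E : esum [set: G] (fun x => (nC (f x) `^ r)%:E) = (\sum_(x <- s) nC (f x) `^ r)%:E.
  apply: esum_seq => // [x|x xs]; first exact: powR_ge0.
  by rewrite hout // nC0 powR0 // gt_eqF.
by rewrite /lp_mem /lpnorm E; split => //; exact: ltry.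
Qed.

Lemma l1_seq (f : G -> C) (s : seq G) : uniq s ->
  (forall x, x \notin s -> f x = 0) ->
  l1_mem f /\ l1norm f = \sum_(x <- s) nC (f x).
Proof.
move=> us hout.
have E : esum [set: G] (fun x => (nC (f x))%:E) = (\sum_(x <- s) nC (f x))%:E.
  apply: esum_seq => // [x|x xs]; first exact: nC_ge0.
  by rewrite hout // nC0.
by rewrite /l1_mem /l1norm E; split => //; exact: ltry.
Qed.

Lemma conj_exp_gt0 (p : R) : 1 < p -> 0 < conj_exp p.
Proof. by move=> hp; rewrite /conj_exp divr_gt0 ?subr_gt0 // (lt_trans ltr01). Qed.

Lemma Ap_small (p : R) (u : G -> C) (s : seq G) : 1 < p -> uniq s ->
  (forall x, x \notin s -> u x = 0) ->
  Ap_mem p u /\ Apnorm p u <= lpnorm (conj_exp p) u.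
Proof.
move=> hp us hout.
have p0 : 0 < p by apply: lt_trans ltr01 hp.
have q0 := conj_exp_gt0 hp.
pose F (i : nat) : G -> C := if i == 0%N then dlt e else (fun _ => 0).
pose Gg (i : nat) : G -> C := if i == 0%N then u else (fun _ => 0).
have lp0 (r : R) : 0 < r -> lp_mem r (fun _ : G => (0 : C)) /\ lpnorm r (fun _ : G => (0 : C)) = 0.
  move=> r0; have [h1 ->] := @lp_seq r (fun _ => 0) [::] r0 isT (fun _ _ => erefl).
  by split => //; rewrite big_nil powR0 // invr_eq0 gt_eqF.
have lpd : lp_mem p (dlt e) /\ lpnorm p (dlt e) = 1.
  have hd : forall x, x \notin [:: e] -> dlt e x = 0.
    by move=> x; rewrite inE /dlt => /negPf ->.
  have [h1 ->] := @lp_seq p (dlt e) [:: e] p0 isT hd.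
  split => //; rewrite big_seq1 /dlt eqxx.
  by rewrite /normC ComplexField.Normc.normc1 !powR1.
have [lpu lpuE] := @lp_seq (conj_exp p) u s q0 us hout.
have costE : rep_cost p F Gg = (lpnorm (conj_exp p) u)%:E.
  rewrite /rep_cost (@esum_seq R nat [:: 0%N] (fun i => lpnorm p (F i) * lpnorm (conj_exp p) (Gg i))) //.
  + by rewrite big_seq1 /= lpd.2 mul1r.
  + by move=> i; apply: mulr_ge0; rewrite /lpnorm powR_ge0.
  + move=> i; rewrite inE => /negPf hi; rewrite /F hi (lp0 p p0).2; exact: mul0r.
have repr : Ap_repr p F Gg u.
  split; [|split].
  - move=> i; rewrite /F /Gg; case: (i == 0%N); first by split => //; case: lpd.
    by split; [case: (lp0 p p0)|case: (lp0 _ q0)].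
  - by rewrite costE; exact: ltry.
  - move=> x; rewrite (@sumC_seq R nat [:: 0%N]) // ?big_seq1 /= ?conv_dlt //.
    move=> i; rewrite inE => /negPf hi; rewrite /Gg hi /Defs.conv (@sumC_seq R G [::]) ?big_nil //.
    by move=> y _; rewrite mul0r.
split; first by exists F, Gg.
rewrite /Apnorm; apply: ge_inf.
  exists 0 => r [f [g [_ ->]]]; apply: fine_ge0; apply: esum_ge0 => i _.
  by rewrite lee_fin; apply: mulr_ge0; rewrite /lpnorm powR_ge0.
by exists F, Gg; split => //; rewrite costE.
Qed.

End Rep.

Section Bound.
Variables (R : realType) (G : dgroup).
Local Notation C := (R[i]).
Local Notation nC := (@normC R).

Lemma nC_real (r : R) : 0 <= r -> nC (r%:C)%C = r.
Proof.
move=> r0; rewrite /normC /= expr0n /= addr0 sqrtr_sqr ger0_norm //.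
Qed.

Lemma sum_cst_seq (T : Type) (s : seq T) (k : R) : \sum_(x <- s) k = k *+ size s.
Proof. by elim: s => [|y s IH]; rewrite ?big_nil ?big_cons ?IH ?mulrS. Qed.

Lemma size_bound (p alpha : R) : 1 < p ->
  (forall f : G -> C, l1_mem f -> Apnorm p f <= 1 -> l1norm f <= alpha) ->
  forall s : seq G, uniq s -> (size s)%:R <= alpha `^ p.
Proof.
move=> hp hyp s us.
have p0 : 0 < p by apply: lt_trans ltr01 hp.
case: s us => [|y s'] us; first by rewrite /= powR_ge0.
set s := y :: s' in us *.
set nR : R := (size s)%:R.
have nR0 : 0 < nR by rewrite /nR ltr0n.
set q := conj_exp p.
have q0 : 0 < q := conj_exp_gt0 hp.
set c := nR `^ (- q^-1).
have c0 : 0 < c by rewrite /c powR_gt0.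
pose u : G -> C := fun x => if x \in s then (c%:C)%C else 0.
have hout : forall x, x \notin s -> u x = 0 by move=> x /negPf; rewrite /u => ->.
have [_ hA] := Ap_small hp us hout.
have [_ lE] := @lp_seq R G q u s q0 us hout.
have [l1m l1E] := l1_seq us hout.
have sE (F : G -> R) : \sum_(x <- s) F (x) = \sum_(x <- s) F x := erefl.
have Au : Apnorm p u <= 1.
  apply: le_trans hA _; rewrite lE.
  rewrite big_seq (eq_bigr (fun _ => c `^ q)) -?big_seq; last first.
    by move=> x xs; rewrite /u xs nC_real // ltW.
  rewrite sum_cst_seq -/nR /c -powRrM mulNr mulVf ?gt_eqF // powRN powRr1 ?(ltW nR0) //.
  by rewrite -mulr_natr mulVf ?gt_eqF // powR1.
have := hyp u l1m Au; rewrite l1E.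
rewrite big_seq (eq_bigr (fun _ => c)) -?big_seq; last first.
  by move=> x xs; rewrite /u xs nC_real // ltW.
rewrite sum_cst_seq -/nR -mulr_natr => hle.
have E1 : c * nR = nR `^ (1 - q^-1).
  rewrite powRD; last by rewrite (gt_eqF nR0) implybT.
  by rewrite powRr1 ?(ltW nR0) // mulrC.
have E2 : (1 - q^-1) * p = 1.
  by rewrite /q /conj_exp invf_div; field; rewrite (gt_eqF p0).
rewrite -[nR](powRr1 (ltW nR0)) -[X in nR `^ X]E2 powRrM -E1.
apply: ge0_ler_powR => //; first exact: ltW.
  by rewrite nnegrE mulr_ge0 ?ltW.
by rewrite nnegrE (le_trans _ hle) // mulr_ge0 ?ltW.
Qed.

End Bound.

Section Arens.
Variables (R : realType) (G : dgroup).
Local Notation C := (R[i]).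
Local Notation nC := (@normC R).
Local Notation dl := (@dlt R G).

Lemma arens_fin (S : set (G -> C)) (N : (G -> C) -> R) (s : seq G) (alpha : R) :
  uniq s -> (forall x, x \in s) -> (forall f, S f) ->
  (forall f, N f <= 1 -> forall x, nC (f x) <= alpha) ->
  arens_regular S N.
Proof.
move=> us alls allS hbd a b T ha hb hT l1 l2 hL hK.
have [Tadd [Tsc _]] := hT.
have T0 : T (fun _ => 0) = 0.
  have h := Tsc 0 (fun _ => 0) (allS _).
  rewrite -[RHS](mul0r (T (fun _ : G => 0))) -h.
  by congr T; apply: funext => x; rewrite mulr0.
have Tsum : forall (l : seq G) (c : G -> C),
    T (fun y => \sum_(x <- l) c x * dl x y) = \sum_(x <- l) c x * T (dl x).
  elim => [|z l IH] c.
    have -> : (fun y => \sum_(x <- [::]) c x * dl x y) = (fun _ => 0).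
      by apply: funext => y; rewrite big_nil.
    by rewrite T0 big_nil.
  have -> : (fun y => \sum_(x <- z :: l) c x * dl x y) =
     (fun y => (fun y => c z * dl z y) y + (fun y => \sum_(x <- l) c x * dl x y) y).
    by apply: funext => y; rewrite big_cons.
  by rewrite Tadd ?allS // IH big_cons Tsc ?allS.
have Tdec : forall f, T f = \sum_(x <- s) f x * T (dl x).
  move=> f; rewrite -Tsum; congr T; apply: funext => y.
  rewrite (bigD1_seq y) ?alls //= /dlt eqxx mulr1 big1 ?addr0 // => x /negPf hx.
  by rewrite eq_sym hx mulr0.
have hA n x : nC (a n x) <= alpha by apply: hbd; case: (ha n).
have hB n x : nC (b n x) <= alpha by apply: hbd; case: (hb n).
apply: (@double_lim R G s a b (fun x => T (dl x)) alpha hA hB).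
  case: hL => L [hL1 hL2]; exists L; split => // n.
  have E : (fun m => T (fun x => a n x * b m x)) =
           (fun m => \sum_(x <- s) a n x * b m x * T (dl x)).
    by apply: funext => m; rewrite Tdec.
  by rewrite -E.
case: hK => K [hK1 hK2]; exists K; split => // m.
have E : (fun n => T (fun x => a n x * b m x)) =
         (fun n => \sum_(x <- s) a n x * b m x * T (dl x)).
  by apply: funext => n; rewrite Tdec.
by rewrite -E.
Qed.

End Arens.

Unset Implicit Arguments.
From Stdlib Require Classical_Prop.
From mathcomp Require Import finmap.

Theorem theorem3p7 (R : realType) (G : dgroup) (p : R) (hp : 1 < p) :
  (exists alpha : R, 0 < alpha /\
     forall f : G -> R[i], l1_mem f -> Apnorm p f <= 1 -> l1norm f <= alpha) ->
  [/\ @arens_regular R G (@l1_mem R G) (@Apnorm R G p),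
      @arens_regular R G (@Ap_mem R G p) (@Apnorm R G p),
      ~ (exists H : set G, is_subgroup H /\ abelian_set H /\ ~ finite_set H),
      ~ (exists (Hs : nat -> set G) (sz : nat -> nat),
            forall n, is_subgroup (Hs n) /\ has_card (Hs n) (sz n) /\ (sz n < sz n.+1)%N)
    & exists M : nat, (0 < M)%N /\ forall x : G, order_le x M].
Proof.
move=> [alpha [a0 hyp]].
set Nb := (Num.trunc (alpha `^ p)).+1.
have hbound : forall s : seq G, uniq s -> (size s < Nb)%N.
  move=> s us; rewrite -(ltr_nat R); apply: le_lt_trans (size_bound hp hyp us) _.
  exact: truncnS_gt.
have hinf : forall A : set G, ~ finite_set A -> False.
  move=> A /(infinite_set_fset Nb) [B _ hB].
  by have := hbound _ (finmap.fset_uniq B); rewrite ltnNge hB.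
have hfin : finite_set [set: G] by apply: Classical_Prop.NNPP => /hinf.
have [X hX] := (finite_fsetP (A := [set: G])).1 hfin.
have alls : forall x : G, x \in (X : seq G).
  by move=> x; have : [set: G] x by []; rewrite hX.
have uX : uniq (X : seq G) := finmap.fset_uniq X.
have hout : forall (f : G -> R[i]) x, x \notin (X : seq G) -> f x = 0.
  by move=> f x; rewrite alls.
have hbd : forall f : G -> R[i], Apnorm p f <= 1 -> forall x, normC (f x) <= alpha.
  move=> f hf x; have [l1m l1E] := l1_seq uX (hout f).
  have := hyp f l1m hf; rewrite l1E; apply: le_trans.
  rewrite (bigD1_seq x) ?alls //= lerDl sumr_ge0 // => y _; exact: nC_ge0.
split.
- apply: (arens_fin uX alls _ hbd) => f; exact: (l1_seq uX (hout f)).1.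
- apply: (arens_fin uX alls _ hbd) => f; exact: (Ap_small hp uX (hout f)).1.
- by move=> [H [_ [_ hH]]]; exact: hinf hH.
- move=> [Hs [sz hs]].
  have hge : forall n, (n <= sz n)%N.
    by elim => // n IH; have := (hs n).2.2; exact: leq_ltn_trans IH.
  have [e [einj erange]] := (hs Nb).2.1.
  have u : uniq (map e (enum 'I_(sz Nb))) by rewrite map_inj_uniq // enum_uniq.
  have := hbound _ u.
  by rewrite size_map size_enum_ord ltnNge hge.
- exists Nb; split => // x.
  set s := [seq gpow x i | i <- iota 0 Nb].
  have : ~~ uniq s.
    by apply/negP => us; have := hbound _ us; rewrite size_map size_iota ltnn.
  case/(uniqPn (gone G)) => i [j [ij jNb eq]].
  rewrite size_map size_iota in jNb.
  have iNb := ltn_trans ij jNb.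
  rewrite !(nth_map 0%N) ?size_iota // !nth_iota // !add0n in eq.
  exists (j - i)%N; split.
    by rewrite subn_gt0 ij /= (leq_trans (leq_subr _ _) (ltnW jNb)).
  apply: (@gmul_inj G (gpow x i)).
  by rewrite -gpowD subnKC ?(ltnW ij) // gmul1r eq.
Qed.
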